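(* Let $(R,\Lambda,S)$ be a generalised Renner–Coxeter system with unit group $W$. For every $r\in R$: (i) there exists a unique triple $(w_1,e,w_2)$ with $e\in\Lambda$, $w_1$ the element of minimal length of the coset $w_1W_\star(e)$, $w_2$ the element of minimal length of the coset $W(e)w_2$, such that $r=w_1ew_2$; (ii) there exists a unique triple $(v_1,e,v_2)$ with $e\in\Lambda$, $v_1$ the element of minimal length of $v_1W(e)$, $v_2$ the element of minimal length of $W_\star(e)v_2$, such that $r=v_1ev_2$.
   Context: For a monoid $R$, $E(R)$ is its set of idempotents, $G(R)$ its unit group. $R$ is factorisable if $R=E(R)G(R)=G(R)E(R)$ and idempotents commute; then $E(R)$ is a semilattice ($e\le f\iff ef=fe=e$) on which $G(R)$ acts by conjugation. For $e\in E(R)$, $W(e)=\{w\in G(R)\mid we=ew\}$, $W_\star(e)=\{w\mid we=ew=e\}$. For a Coxeter system $(W,S)$, $W_I$ is the subgroup generated by $I\subseteq S$ and lengths are Coxeter lengths (each coset of a standard parabolic subgroup has a unique element of minimal length). A generalised Renner–Coxeter system is a triple $(R,\Lambda,S)$ with: (ECS1) $R$ factorisable; (ECS2) $\Lambda\subseteq E(R)$ contains exactly one element of each $G(R)$-orbit and is closed under multiplication; (ECS3) $(G(R),S)$ is a Coxeter system; (ECS4) for $e_1\le e_2$ in $E(R)$ there are $w\in G(R)$, $f_1\le f_2$ in $\Lambda$ with $wf_iw^{-1}=e_i$; (ECS5) for $e\in\Lambda$, $W(e)$, $W_\star(e)$ are of the form $W_I$; (ECS6) with $\lambda^\star(e)=\{s\in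 S\mid se=es\ne e\}$, $e\le f$ in $\Lambda$ implies $\lambda^\star(e)\subseteq\lambda^\star(f)$. $W=G(R)$. *)

(* Defs.v *)
From Stdlib Require Import List Arith.
Import ListNotations.

Section Defs.
Context {R : Type} (mul : R -> R -> R) (one : R).

Definition is_monoid : Prop :=
  (forall x y z, mul x (mul y z) = mul (mul x y) z) /\
  (forall x, mul one x = x) /\ (forall x, mul x one = x).

Definition is_unit (x : R) : Prop := exists y, mul x y = one /\ mul y x = one.

Definition idem (e : R) : Prop := mul e e = e.

Definition leE (e f : R) : Prop := mul e f = e /\ mul f e = e.

Definition conj_by (w f e : R) : Prop :=
  exists w', mul w w' = one /\ mul w' w = one /\ mul (mul w f) w' = e.

Definition prod (l : list R) : R := fold_right mul one l.

Fixpoint pow (x : R) (n : nat) : R :=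
  match n with O => one | S n => mul x (pow x n) end.

Definition factorisable : Prop :=
  (forall r, exists e w, idem e /\ is_unit w /\ r = mul e w) /\
  (forall r, exists w e, is_unit w /\ idem e /\ r = mul w e) /\
  (forall e f, idem e -> idem f -> mul e f = mul f e).

(* (G(R), S) is a Coxeter system: S is a set of involutions (distinct from 1)
   generating G(R), and G(R) has the presentation
   < S | (st)^{m(s,t)} = 1 >, m(s,t) the order of st, i.e. every map from S
   into a group respecting these relations extends to a homomorphism. *)
Definition coxeter_system (S : R -> Prop) : Prop :=
  (forall s, S s -> is_unit s /\ s <> one /\ mul s s = one) /\
  (forall w, is_unit w -> exists l, Forall S l /\ prod l = w) /\
  (forall (H : Type) (hmul : H -> H -> H) (hone : H) (hinv : H -> H),
     (forall x y z, hmul x (hmul y z) = hmul (hmul x y) z) ->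
     (forall x, hmul hone x = x) -> (forall x, hmul x hone = x) ->
     (forall x, hmul (hinv x) x = hone) -> (forall x, hmul x (hinv x) = hone) ->
     forall f : R -> H,
       (forall s t n, S s -> S t -> pow (mul s t) n = one ->
          fold_right hmul hone (repeat (hmul (f s) (f t)) n) = hone) ->
       exists phi : R -> H,
         (forall x y, is_unit x -> is_unit y -> phi (mul x y) = hmul (phi x) (phi y)) /\
         (forall s, S s -> phi s = f s)).

Definition parabolic (I : R -> Prop) (w : R) : Prop :=
  exists l, Forall I l /\ prod l = w.

Definition clen (S : R -> Prop) (w : R) (n : nat) : Prop :=
  (exists l, Forall S l /\ length l = n /\ prod l = w) /\
  (forall l, Forall S l -> prod l = w -> n <= length l).

Definition Wc (e w : R) : Prop := is_unit w /\ mul w e = mul e w.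
Definition Wstar (e w : R) : Prop := is_unit w /\ mul w e = e /\ mul e w = e.

Definition min_left (S H : R -> Prop) (w : R) : Prop :=
  forall u, H u -> forall n m, clen S w n -> clen S (mul w u) m -> n <= m.
Definition min_right (S H : R -> Prop) (w : R) : Prop :=
  forall u, H u -> forall n m, clen S w n -> clen S (mul u w) m -> n <= m.

Definition lam_star (S : R -> Prop) (e s : R) : Prop :=
  S s /\ mul s e = mul e s /\ mul s e <> e.

Definition gen_renner_coxeter (Lambda S : R -> Prop) : Prop :=
  is_monoid /\
  (* ECS1 *) factorisable /\
  (* ECS2 *) (forall e, Lambda e -> idem e) /\
             (forall e, idem e -> exists f, Lambda f /\ (exists w, is_unit w /\ conj_by w f e) /\
                 forall f', Lambda f' -> (exists w, is_unit w /\ conj_by w f' e) -> f' = f) /\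
             (forall e f, Lambda e -> Lambda f -> Lambda (mul e f)) /\
  (* ECS3 *) (forall s, S s -> is_unit s) /\ coxeter_system S /\
  (* ECS4 *) (forall e1 e2, idem e1 -> idem e2 -> leE e1 e2 ->
                exists w f1 f2, is_unit w /\ Lambda f1 /\ Lambda f2 /\ leE f1 f2 /\
                  conj_by w f1 e1 /\ conj_by w f2 e2) /\
  (* ECS5 *) (forall e, Lambda e ->
                (exists I, (forall s, I s -> S s) /\ forall w, Wc e w <-> parabolic I w) /\
                (exists I, (forall s, I s -> S s) /\ forall w, Wstar e w <-> parabolic I w)) /\
  (* ECS6 *) (forall e f, Lambda e -> Lambda f -> leE e f ->
                forall s, lam_star S e s -> lam_star S f s).

End Defs.

(* Main.v *)
Require Import Defs.
From Stdlib Require Import List Arith Lia Classical ClassicalEpsilon FunctionalExtensionality ProofIrrelevance Bool.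
Import ListNotations.

Section Mon.
Context {R : Type} (mul : R -> R -> R) (one : R).
Context (assoc : forall x y z, mul x (mul y z) = mul (mul x y) z)
        (lid : forall x, mul one x = x) (rid : forall x, mul x one = x).

Notation U := (is_unit mul one).

Definition uinv (w : R) : R :=
  match excluded_middle_informative (U w) with
  | left h => proj1_sig (constructive_indefinite_description _ h)
  | right _ => one end.

Lemma uinv_spec w : U w -> mul w (uinv w) = one /\ mul (uinv w) w = one.
Proof.
  intro h. unfold uinv. destruct (excluded_middle_informative (U w)) as [h'|n]; [|contradiction].
  destruct (constructive_indefinite_description _ h') as [v Hv]. exact Hv.
Qed.
Lemma uinv_r w : U w -> mul w (uinv w) = one. Proof. intro h; apply (uinv_spec w h). Qed.
Lemma uinv_l w : U w -> mul (uinv w) w = one. Proof. intro h; apply (uinv_spec w h). Qed.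

Lemma inv_unique w v : U w -> mul w v = one -> v = uinv w.
Proof.
  intros h e. rewrite <- (lid v). rewrite <- (uinv_l w h). rewrite <- assoc, e, rid. reflexivity.
Qed.
Lemma inv_unique_l w v : U w -> mul v w = one -> v = uinv w.
Proof.
  intros h e. rewrite <- (rid v). rewrite <- (uinv_r w h). rewrite assoc, e, lid. reflexivity.
Qed.

Lemma unit_one : U one. Proof. exists one. rewrite lid. auto. Qed.
Lemma unit_mul a b : U a -> U b -> U (mul a b).
Proof.
  intros [a' [h1 h2]] [b' [h3 h4]]. exists (mul b' a'). split.
  - rewrite <- assoc, (assoc b b' a'), h3, lid. exact h1.
  - rewrite <- assoc, (assoc a' a b), h2, lid. exact h4.
Qed.
Lemma unit_inv a : U a -> U (uinv a).
Proof. intro h. exists a. split; [apply uinv_l|apply uinv_r]; auto. Qed.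
Lemma inv_inv a : U a -> uinv (uinv a) = a.
Proof. intro h. symmetry. apply inv_unique. apply unit_inv; auto. apply uinv_l; auto. Qed.
Lemma inv_mul a b : U a -> U b -> uinv (mul a b) = mul (uinv b) (uinv a).
Proof.
  intros ha hb. symmetry. apply inv_unique. apply unit_mul; auto.
  rewrite <- assoc, (assoc b (uinv b)), uinv_r, lid, uinv_r; auto.
Qed.
Lemma inv_one : uinv one = one.
Proof. symmetry. apply inv_unique. apply unit_one. apply lid. Qed.

Lemma cancel_l a x y : U a -> mul a x = mul a y -> x = y.
Proof.
  intros h e. rewrite <- (lid x), <- (lid y), <- (uinv_l a h), <- !assoc, e. reflexivity.
Qed.
Lemma cancel_r a x y : U a -> mul x a = mul y a -> x = y.
Proof.
  intros h e. rewrite <- (rid x), <- (rid y), <- (uinv_r a h), !assoc, e. reflexivity.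
Qed.

Lemma prod_app l1 l2 : prod mul one (l1 ++ l2) = mul (prod mul one l1) (prod mul one l2).
Proof. induction l1; simpl. rewrite lid; auto. rewrite IHl1, assoc; auto. Qed.

Lemma pow_S_r x k : pow mul one x (S k) = mul (pow mul one x k) x.
Proof. induction k. simpl. rewrite lid, rid; auto.
  change (pow mul one x (S (S k))) with (mul x (pow mul one x (S k))). rewrite IHk at 1. rewrite assoc. reflexivity. Qed.
Lemma pow_add x a b : pow mul one x (a + b) = mul (pow mul one x a) (pow mul one x b).
Proof. induction a; simpl. rewrite lid; auto. rewrite IHa, assoc; auto. Qed.

End Mon.


Section Grp.
Context {R : Type} (mul : R -> R -> R) (one : R).
Context (assoc : forall x y z, mul x (mul y z) = mul (mul x y) z)
        (lid : forall x, mul one x = x) (rid : forall x, mul x one = x).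
Notation U := (is_unit mul one).
Notation inv := (uinv mul one).

Lemma cr1 w x : U w -> mul (mul x (inv w)) w = x.
Proof. intro h. rewrite <- assoc, uinv_l, rid; auto. Qed.
Lemma cr2 w x : U w -> mul (mul x w) (inv w) = x.
Proof. intro h. rewrite <- assoc, uinv_r, rid; auto. Qed.

Definition reqb (a b : R) : bool := if excluded_middle_informative (a = b) then true else false.
Lemma reqb_iff a b : reqb a b = true <-> a = b.
Proof. unfold reqb; destruct excluded_middle_informative; split; congruence. Qed.
Lemma reqb_ext a b c d : (a = b <-> c = d) -> reqb a b = reqb c d.
Proof.
  intro h. unfold reqb. destruct (excluded_middle_informative (a=b)), (excluded_middle_informative (c=d)); tauto.
Qed.
Lemma reqb_refl a : reqb a a = true. Proof. apply reqb_iff; auto. Qed.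

Definition H := {p : R * (R -> bool) | U (fst p)}.
Definition fw (a : H) : R := fst (proj1_sig a).
Definition fA (a : H) : R -> bool := snd (proj1_sig a).
Lemma fwU (a : H) : U (fw a). Proof. exact (proj2_sig a). Qed.

Lemma Heq (a b : H) : fw a = fw b -> (forall t, fA a t = fA b t) -> a = b.
Proof.
  destruct a as [[w A] ha], b as [[w' A'] hb]; unfold fw, fA; simpl; intros e1 e2.
  subst w'. assert (A = A') by (extensionality t; auto). subst A'.
  f_equal. apply proof_irrelevance.
Qed.

Definition hmul (a b : H) : H :=
  exist _ (mul (fw a) (fw b), fun t => xorb (fA b t) (fA a (mul (mul (fw b) t) (inv (fw b)))))
    (unit_mul mul one assoc lid _ _ (fwU a) (fwU b)).
Definition hone : H := exist _ (one, fun _ => false) (unit_one mul one lid).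
Definition hinv (a : H) : H :=
  exist _ (inv (fw a), fun t => fA a (mul (mul (inv (fw a)) t) (fw a))) (unit_inv mul one _ (fwU a)).

Lemma fw_hmul a b : fw (hmul a b) = mul (fw a) (fw b). Proof. reflexivity. Qed.
Lemma fA_hmul a b t : fA (hmul a b) t = xorb (fA b t) (fA a (mul (mul (fw b) t) (inv (fw b)))).
Proof. reflexivity. Qed.

Lemma hassoc x y z : hmul x (hmul y z) = hmul (hmul x y) z.
Proof.
  apply Heq. simpl. apply assoc. intro t. rewrite !fA_hmul, !fw_hmul.
  rewrite xorb_assoc. f_equal. f_equal. f_equal.
  rewrite inv_mul; try apply fwU; auto. rewrite !assoc. reflexivity.
Qed.
Lemma hlid x : hmul hone x = x.
Proof. apply Heq. apply lid. intro t. rewrite fA_hmul. simpl. apply xorb_false_r. Qed.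
Lemma hrid x : hmul x hone = x.
Proof. apply Heq. apply rid. intro t. rewrite fA_hmul. unfold hone, fw, fA at 1; simpl.
  rewrite inv_one, lid, rid; auto. Qed.
Lemma fw_hinv a : fw (hinv a) = inv (fw a). Proof. reflexivity. Qed.
Lemma fA_hinv a t : fA (hinv a) t = fA a (mul (mul (inv (fw a)) t) (fw a)). Proof. reflexivity. Qed.
Lemma fw_hone : fw hone = one. Proof. reflexivity. Qed.
Lemma fA_hone t : fA hone t = false. Proof. reflexivity. Qed.

Lemma hinvl x : hmul (hinv x) x = hone.
Proof. apply Heq. rewrite fw_hmul, fw_hinv. apply uinv_l; auto; apply fwU.
  intro t. rewrite fA_hmul, fA_hinv, fA_hone.
  rewrite !assoc, uinv_l, lid, cr1; try apply fwU; auto. apply xorb_nilpotent. Qed.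
Lemma hinvr x : hmul x (hinv x) = hone.
Proof. apply Heq. rewrite fw_hmul, fw_hinv. apply uinv_r; auto; apply fwU.
  intro t. rewrite fA_hmul, fA_hinv, fA_hone, fw_hinv.
  rewrite inv_inv; auto; try apply fwU. apply xorb_nilpotent. Qed.

End Grp.


Section Rel.
Context {R : Type} (mul : R -> R -> R) (one : R).
Context (assoc : forall x y z, mul x (mul y z) = mul (mul x y) z)
        (lid : forall x, mul one x = x) (rid : forall x, mul x one = x).
Notation U := (is_unit mul one).
Notation inv := (uinv mul one).
Notation pow := (pow mul one).
Context (S : R -> Prop) (HS : forall s, S s -> U s /\ s <> one /\ mul s s = one).

Notation H := (H mul one).
Notation hmul := (hmul mul one assoc lid).
Notation hone := (hone mul one lid).
Notation fw := (fw mul one).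
Notation fA := (fA mul one).

Definition fS (s : R) : H :=
  match excluded_middle_informative (U s) with
  | left h => exist _ (s, fun t => reqb t s) h | right _ => hone end.
Lemma fw_fS s : S s -> fw (fS s) = s.
Proof. intro h. unfold fS. destruct excluded_middle_informative as [|n]; [reflexivity| exfalso; apply n, HS, h]. Qed.
Lemma fA_fS s t : S s -> fA (fS s) t = reqb t s.
Proof. intro h. unfold fS. destruct excluded_middle_informative as [|n]; [reflexivity| exfalso; apply n, HS, h]. Qed.

Lemma inv_S s : S s -> inv s = s.
Proof. intro h. symmetry. apply inv_unique; auto. apply HS, h. apply HS, h. Qed.

Fixpoint xs (g : nat -> bool) n := match n with 0 => false | Datatypes.S n => xorb (xs g n) (g n) end.

Lemma gpow_fw (g : H) n : fw (fold_right hmul hone (repeat g n)) = pow (fw g) n.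
Proof. induction n; simpl. reflexivity. rewrite fw_hmul, IHn. reflexivity. Qed.
Lemma gpow_fA (g : H) n u : fA (fold_right hmul hone (repeat g n)) u =
  xs (fun k => fA g (mul (mul (pow (fw g) k) u) (inv (pow (fw g) k)))) n.
Proof. induction n; simpl. reflexivity. rewrite fA_hmul, IHn, gpow_fw. reflexivity. Qed.

Lemma xs_ext g h n : (forall k, g k = h k) -> xs g n = xs h n.
Proof. intro e. induction n; simpl; congruence. Qed.
Lemma xs_pair g n : xs (fun k => xorb (g (k+k)) (g (k + Datatypes.S k))) n = xs g (n+n).
Proof.
  induction n; simpl. reflexivity. rewrite IHn, Nat.add_succ_r. simpl. rewrite xorb_assoc. reflexivity.
Qed.
Lemma xs_add g n m : xs g (n + m) = xorb (xs g n) (xs (fun j => g (n + j)) m).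
Proof. induction m; simpl. rewrite Nat.add_0_r, xorb_false_r; auto.
  rewrite Nat.add_succ_r. simpl. rewrite IHm, xorb_assoc. reflexivity. Qed.

Lemma pow_inv x y : mul x y = one -> mul y x = one -> forall k, mul (pow x k) (pow y k) = one.
Proof.
  intros h1 h2 k. induction k. simpl; auto.
  rewrite (pow_S_r mul one assoc lid rid x k). simpl.
  rewrite <- assoc, (assoc x y), h1, lid. exact IHk.
Qed.

Lemma conj_iff a b u c : mul a b = one -> mul b a = one -> (mul (mul a u) b = c <-> u = mul (mul b c) a).
Proof.
  intros h1 h2; split; intro e.
  - subst c. rewrite !assoc, h2, lid, <- assoc, h2, rid. auto.
  - subst u. rewrite !assoc, h1, lid, <- assoc, h1, rid. auto.
Qed.

Lemma rel_ok s t n : S s -> S t -> pow (mul s t) n = one ->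
  fold_right hmul hone (repeat (hmul (fS s) (fS t)) n) = hone.
Proof.
  intros hs ht hn.
  destruct (HS s hs) as [us [_ ss]]. destruct (HS t ht) as [ut [_ tt]].
  set (x := mul s t). set (y := mul t s).
  assert (xy : mul x y = one) by (unfold x, y; rewrite <- assoc, (assoc t t), tt, lid; auto).
  assert (yx : mul y x = one) by (unfold x, y; rewrite <- assoc, (assoc s s), ss, lid; auto).
  assert (ipow : forall k, inv (pow x k) = pow y k).
  { intro k. symmetry. apply inv_unique; auto. exists (pow y k). split. apply pow_inv; auto. apply pow_inv; auto.
    apply pow_inv; auto. }
  assert (tx : forall k, mul t (pow x k) = mul (pow y k) t).
  { induction k. simpl. rewrite lid, rid; auto. simpl. rewrite assoc. unfold x.
    rewrite (assoc t s t). fold y. fold x. rewrite <- assoc, IHk, assoc. reflexivity. }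
  assert (yn : pow y n = one).
  { fold x in hn. transitivity (mul (pow x n) (pow y n)). rewrite hn, lid; auto. apply pow_inv; auto. }
  apply Heq.
  - rewrite gpow_fw, fw_hmul, !fw_fS; auto.
  - intro u. rewrite gpow_fA, fA_hone. rewrite fw_hmul, !fw_fS; auto. fold x.
    set (D := fun j => reqb u (mul (pow y j) t)).
    rewrite (xs_ext _ (fun k => xorb (D (k+k)) (D (k + Datatypes.S k)))).
    + rewrite xs_pair, xs_add.
      rewrite (xs_ext (fun j => D (n + j)) D). apply xorb_nilpotent.
      intro j. unfold D. rewrite pow_add, yn, lid; auto.
    + intro k. rewrite fA_hmul, !fA_fS, fw_fS, ipow, (inv_S t ht); auto. unfold D. f_equal.
      * apply reqb_ext. rewrite conj_iff; [|apply pow_inv; auto | apply pow_inv; auto].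
        rewrite <- assoc, tx, assoc, <- pow_add; auto. tauto.
      * apply reqb_ext. rewrite conj_iff; auto. rewrite conj_iff; [|apply pow_inv; auto | apply pow_inv; auto].
        rewrite pow_add; auto. simpl. fold y.
        assert (e : mul (mul (pow y k) (mul y t)) (pow x k) = mul (mul (pow y k) (mul y (pow y k))) t).
        { rewrite <- !assoc. f_equal. rewrite tx, assoc. reflexivity. }
        rewrite e. tauto.
Qed.

End Rel.


Section Cox.
Context {R : Type} (mul : R -> R -> R) (one : R).
Context (assoc : forall x y z, mul x (mul y z) = mul (mul x y) z)
        (lid : forall x, mul one x = x) (rid : forall x, mul x one = x).
Notation U := (is_unit mul one).
Notation inv := (uinv mul one).
Notation prod := (prod mul one).
Context (S : R -> Prop) (Hcox : coxeter_system mul one S).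

Lemma HS : forall s, S s -> U s /\ s <> one /\ mul s s = one.
Proof. apply Hcox. Qed.

Lemma prod_unit l : Forall S l -> U (prod l).
Proof. induction 1; simpl. apply unit_one; auto. apply unit_mul; auto. apply HS; auto. Qed.

Lemma exists_N : exists N : R -> R -> bool,
  (forall l, Forall S l -> forall u, N (prod l) u = true ->
     exists l1 s0 l2, l = l1 ++ s0 :: l2 /\ mul (prod l) u = prod (l1 ++ l2)) /\
  (forall w s, U w -> S s -> N w s = false -> N (mul w s) s = true).
Proof.
  destruct Hcox as [HS' [Hgen Huniv]].
  destruct (Huniv (H mul one) (hmul mul one assoc lid) (hone mul one lid) (hinv mul one)
     (hassoc mul one assoc lid rid) (hlid mul one assoc lid) (hrid mul one assoc lid rid)
     (hinvl mul one assoc lid rid) (hinvr mul one assoc lid rid) (fS mul one lid)) as [phi [Hphi Hs]].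
  { intros s t n hs ht hn. apply (rel_ok mul one assoc lid rid S HS' s t n hs ht hn). }
  set (hm := hmul mul one assoc lid). set (ho := hone mul one lid).
  assert (p1 : phi one = ho).
  { assert (e : phi one = hm (phi one) (phi one)).
    { rewrite <- Hphi. rewrite lid; auto. apply unit_one; auto. apply unit_one; auto. }
    assert (h1: hm (hinv mul one (phi one)) (hm (phi one) (phi one)) = phi one).
    { unfold hm. rewrite hassoc, hinvl, hlid; auto. }
    rewrite <- e in h1. unfold hm, ho in *. rewrite hinvl in h1; auto. }
  assert (pl : forall l, Forall S l -> phi (prod l) = fold_right hm ho (map (fS mul one lid) l)).
  { induction 1; simpl. exact p1. rewrite Hphi, Hs, IHForall; auto. apply HS; auto. apply prod_unit; auto. }
  assert (fwl : forall l, Forall S l -> fw mul one (fold_right hm ho (map (fS mul one lid) l)) = prod l).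
  { induction 1; simpl. reflexivity. unfold hm at 1. rewrite fw_hmul, (fw_fS mul one lid S HS'), IHForall; auto. }
  exists (fun w u => fA mul one (phi w) u). split.
  - intros l hl. rewrite (pl l hl). induction hl as [|s l hs hl IH]; intro u.
    + simpl. intro e; discriminate.
    + simpl. fold hm. unfold hm at 1. rewrite fA_hmul, (fA_fS mul one lid S HS'); auto. fold hm.
      rewrite (fwl l hl). intro e.
      match type of e with xorb ?a ?b = true => destruct a eqn:e1; destruct b eqn:e2; simpl in e; try discriminate end.
      * destruct (IH u e1) as [l1 [s0 [l2 [e3 e4]]]].
        exists (s :: l1), s0, l2. split. simpl; congruence.
        simpl. rewrite <- assoc, e4. reflexivity.
      * apply (proj1 (reqb_iff _ _)) in e2. exists [], s, l. split. reflexivity.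
        simpl. assert (ul := prod_unit l hl).
        apply (proj1 (conj_iff mul one assoc lid rid _ _ _ _ (uinv_r mul one _ ul) (uinv_l mul one _ ul))) in e2.
        rewrite e2. rewrite !assoc. rewrite <- (assoc s), uinv_r, rid; auto.
        destruct (HS s hs) as [_ [_ ss]]. rewrite ss, lid; auto.
  - intros w s uw hs e. rewrite Hphi; auto; [|apply HS; auto]. rewrite (Hs s hs).
    rewrite fA_hmul, (fA_fS mul one lid S HS'), (fw_fS mul one lid S HS'), (inv_S mul one assoc lid rid S HS'); auto.
    destruct (HS s hs) as [_ [_ ss]]. rewrite ss, lid, e, reqb_refl. reflexivity.
Qed.

End Cox.


Lemma min_nat (P : nat -> Prop) : (exists n, P n) -> exists n, P n /\ forall m, P m -> n <= m.
Proof.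
  intros [n Hn]. apply NNPP; intro C.
  assert (Hk : forall k m, m <= k -> ~ P m).
  { induction k; intros m hm hP.
    - apply C. exists m. split; auto. intros; lia.
    - apply C. exists m. split; auto. intros m' hm'. apply NNPP; intro hlt.
      apply (IHk m'); auto. lia. }
  apply (Hk n n); auto.
Qed.

Section Len.
Context {R : Type} (mul : R -> R -> R) (one : R).
Context (assoc : forall x y z, mul x (mul y z) = mul (mul x y) z)
        (lid : forall x, mul one x = x) (rid : forall x, mul x one = x).
Notation U := (is_unit mul one).
Notation inv := (uinv mul one).
Notation prod := (prod mul one).
Context (S : R -> Prop) (Hcox : coxeter_system mul one S).
Context (N : R -> R -> bool)
  (P1 : forall l, Forall S l -> forall u, N (prod l) u = true ->
     exists l1 s0 l2, l = l1 ++ s0 :: l2 /\ mul (prod l) u = prod (l1 ++ l2))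
  (P2 : forall w s, U w -> S s -> N w s = false -> N (mul w s) s = true).

Notation clen := (clen mul one S).
Notation par := (parabolic mul one).

Lemma HS' s : S s -> U s /\ s <> one /\ mul s s = one. Proof. apply (HS mul one S Hcox). Qed.
Lemma Hgen w : U w -> exists l, Forall S l /\ prod l = w. Proof. apply Hcox. Qed.
Lemma pU l : Forall S l -> U (prod l). Proof. apply (prod_unit mul one assoc lid S Hcox). Qed.
Lemma pApp l1 l2 : prod (l1 ++ l2) = mul (prod l1) (prod l2). Proof. apply prod_app; auto. Qed.
Lemma uM a b : U a -> U b -> U (mul a b). Proof. apply unit_mul; auto. Qed.
Lemma uI a : U a -> U (inv a). Proof. apply unit_inv. Qed.
Lemma iR w : U w -> mul w (inv w) = one. Proof. apply uinv_r. Qed.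
Lemma iL w : U w -> mul (inv w) w = one. Proof. apply uinv_l. Qed.
Lemma iI w : U w -> inv (inv w) = w. Proof. apply inv_inv; auto. Qed.
Lemma iM a b : U a -> U b -> inv (mul a b) = mul (inv b) (inv a). Proof. apply inv_mul; auto. Qed.
Lemma cL a x y : U a -> mul a x = mul a y -> x = y. Proof. apply cancel_l; auto. Qed.
Lemma cR a x y : U a -> mul x a = mul y a -> x = y. Proof. apply cancel_r; auto. Qed.

Lemma prod_rev l : Forall S l -> inv (prod l) = prod (rev l).
Proof.
  intro hl. symmetry. apply inv_unique; auto. apply pU; auto.
  induction hl; simpl. apply lid.
  rewrite pApp. simpl. rewrite rid, <- assoc, (assoc (prod l)), IHhl, lid. apply HS'; auto.
Qed.

Lemma len_exists w : U w -> exists n, clen w n.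
Proof.
  intro uw. destruct (min_nat (fun n => exists l, Forall S l /\ length l = n /\ prod l = w)) as [n [Hn Hm]].
  { destruct (Hgen w uw) as [l [h1 h2]]. exists (length l), l. auto. }
  exists n. split; auto. intros l h1 h2. apply Hm. exists l; auto.
Qed.

Lemma clen_unique w n m : clen w n -> clen w m -> n = m.
Proof.
  intros [[l1 [a1 [b1 c1]]] d1] [[l2 [a2 [b2 c2]]] d2].
  specialize (d1 l2 a2 c2). specialize (d2 l1 a1 c1). lia.
Qed.

Lemma clen_inv w n : U w -> clen w n -> clen (inv w) n.
Proof.
  intros uw [[l [a [b c]]] d]. split.
  - exists (rev l). split. apply Forall_rev; auto. split. rewrite length_rev; auto.
    rewrite <- prod_rev; subst; auto.
  - intros l' h1 h2. rewrite <- length_rev. apply d. apply Forall_rev; auto.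
    rewrite <- prod_rev; auto. rewrite h2. apply iI; auto.
Qed.

Lemma desc_true w s n m : U w -> S s -> clen w n -> clen (mul w s) m -> N w s = true -> m + 1 = n.
Proof.
  intros uw hs [[l [a [b c]]] d] [[l' [a' [b' c']]] d'] e. subst w.
  destruct (P1 l a s e) as [l1 [s0 [l2 [e1 e2]]]].
  assert (m <= length (l1 ++ l2)).
  { apply d'; auto. subst l. apply Forall_app in a. destruct a as [a1 a2]. inversion a2.
    apply Forall_app; auto. }
  assert (length l <= m + 1).
  { replace (m + 1) with (length (l' ++ [s])) by (rewrite length_app; simpl; lia).
    rewrite b. apply d. apply Forall_app; auto.
    rewrite pApp, c'. simpl. rewrite rid, <- assoc. destruct (HS' s hs) as [_ [_ ss]]. rewrite ss, rid; auto. }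
  subst l. rewrite !length_app in *. simpl in *. lia.
Qed.

Lemma desc_false w s n m : U w -> S s -> clen w n -> clen (mul w s) m -> N w s = false -> m = n + 1.
Proof.
  intros uw hs h1 h2 e. apply P2 in e; auto.
  assert (e' : mul (mul w s) s = w).
  { rewrite <- assoc. destruct (HS' s hs) as [_ [_ ss]]. rewrite ss, rid; auto. }
  rewrite <- e' in h1. symmetry. apply (desc_true (mul w s) s m n); auto. apply uM; auto; apply HS'; auto.
Qed.

Context (I : R -> Prop) (HI : forall s, I s -> S s).

Lemma parU h : par I h -> U h.
Proof. intros [l [a b]]. subst. apply pU. eapply Forall_impl; eauto. Qed.
Lemma parM a b : par I a -> par I b -> par I (mul a b).
Proof. intros [l [a1 b1]] [l' [a2 b2]]. exists (l ++ l'). split. apply Forall_app; auto. rewrite pApp; congruence. Qed.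
Lemma parI a : par I a -> par I (inv a).
Proof. intros [l [a1 b1]]. exists (rev l). split. apply Forall_rev; auto. subst. rewrite prod_rev; auto.
  eapply Forall_impl; eauto. Qed.
Lemma par1 : par I one. Proof. exists []. auto. Qed.


Lemma mainL w p : U w -> clen w p -> min_left mul one S (par I) w ->
  forall k, Forall I k -> (forall k', Forall I k' -> prod k' = prod k -> length k <= length k') ->
  clen (mul w (prod k)) (p + length k).
Proof.
  intros uw hp hmin k. induction k as [|s k IH] using rev_ind; intros hk hmk.
  - simpl. rewrite rid, Nat.add_0_r. exact hp.
  - apply Forall_app in hk. destruct hk as [hk hs']. inversion hs' as [|? ? hs _]; subst.
    assert (hsS : S s) by auto.
    assert (hkS : Forall S k) by (eapply Forall_impl; eauto).
    assert (IH' : clen (mul w (prod k)) (p + length k)).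
    { apply IH; auto. intros k' h1 h2. specialize (hmk (k' ++ [s])).
      rewrite !length_app in hmk. simpl in hmk.
      assert (length k + 1 <= length k' + 1); [|lia]. apply hmk. apply Forall_app; auto.
      rewrite !pApp, h2; auto. }
    set (v := mul w (prod k)).
    assert (uv : U v) by (apply uM; auto; apply pU; auto).
    assert (evs : mul w (prod (k ++ [s])) = mul v s).
    { unfold v. rewrite pApp. simpl. rewrite rid, assoc. reflexivity. }
    rewrite evs. destruct (len_exists (mul v s)) as [m hm]. apply uM; auto; apply HS'; auto.
    destruct (N v s) eqn:Ev.
    + exfalso.
      pose proof hp as hp0. destruct hp0 as [[a [ha [la pa]]] _].
      assert (hL : Forall S (a ++ k)) by (apply Forall_app; auto).
      assert (pL : prod (a ++ k) = v) by (rewrite pApp, pa; reflexivity).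
      rewrite <- pL in Ev. destruct (P1 _ hL s Ev) as [l1 [s0 [l2 [e1 e2]]]].
      rewrite pL in e2.
      assert (HB : forall k1, k = k1 ++ s0 :: l2 -> l1 = a ++ k1 -> False).
      { intros k1 ek el. subst k l1.
        rewrite !pApp in e2. unfold v in e2. rewrite pApp in e2. rewrite <- !assoc in e2.
        rewrite pa in e2. apply cL in e2; auto. simpl in e2.
        specialize (hmk (k1 ++ l2)).
        assert (Hl : length ((k1 ++ s0 :: l2) ++ [s]) <= length (k1 ++ l2)).
        { apply hmk. apply Forall_app in hk. destruct hk as [hk1 hk2]. inversion hk2. apply Forall_app; auto.
          rewrite !pApp. simpl. rewrite rid, <- e2, !assoc. reflexivity. }
        rewrite !length_app in Hl. simpl in Hl. lia. }
      destruct (app_eq_app a k l1 (s0 :: l2) e1) as [l' [[ea eb]|[ea eb]]].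
      * destruct l' as [|x a2].
        -- rewrite app_nil_r in ea. subst a. simpl in eb. apply (HB []); auto. rewrite app_nil_r; auto.
        -- inversion eb; subst x l2. subst a.
           set (z := mul (mul (prod k) s) (inv (prod k))).
           assert (pz : par I z).
           { unfold z. apply parM. apply parM. exists k; auto. exists [s]. split; auto. simpl; rewrite rid; auto.
             apply parI. exists k; auto. }
           assert (ewz : mul w z = prod (l1 ++ a2)).
           { unfold z. rewrite !assoc. fold v. rewrite e2. rewrite !pApp, <- !assoc, iR, rid; auto. apply pU; auto. }
           destruct (len_exists (mul w z)) as [m' hm']. apply uM; auto. apply (parU z pz).
           assert (p <= m').
           { apply (hmin z pz p m'); auto. }
           destruct hm' as [_ hm']. assert (m' <= length (l1 ++ a2)).
           { apply hm'; auto. apply Forall_app in ha. destruct ha as [ha1 ha2]. inversion ha2. apply Forall_app; auto. }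
           rewrite !length_app in *. simpl in *. lia.
      * apply (HB l'); auto.
    + assert (m = p + length k + 1) by (eapply desc_false; eauto).
      subst m. rewrite length_app. simpl. rewrite Nat.add_assoc. exact hm.
Qed.

Lemma uniqL w w' u : U w -> min_left mul one S (par I) w -> min_left mul one S (par I) w' ->
  par I u -> w' = mul w u -> w = w'.
Proof.
  intros uw h1 h2 hu e.
  destruct (min_nat (fun n => exists k, Forall I k /\ length k = n /\ prod k = u)) as [n [[k [hk [lk pk]]] hm]].
  { destruct hu as [k [a b]]. exists (length k), k. auto. }
  destruct (len_exists w uw) as [p hp].
  assert (hc : clen w' (p + length k)).
  { rewrite e, <- pk. apply mainL; auto. intros k' a b. rewrite lk. apply hm. exists k'. repeat split; auto. congruence. }
  assert (uu : U u) by (apply parU; auto).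
  assert (ew : mul w' (inv u) = w) by (rewrite e, <- assoc, iR, rid; auto).
  assert (Hl : p + length k <= p).
  { apply (h2 (inv u) (parI u hu)); auto. rewrite ew; auto. }
  destruct k; [|simpl in Hl; lia]. simpl in pk. subst u. rewrite rid in e. auto.
Qed.

Lemma minR_to_L z : U z -> min_right mul one S (par I) z -> min_left mul one S (par I) (inv z).
Proof.
  intros uz h u hu n m h1 h2.
  assert (uu : U u) by (apply parU; auto).
  apply (h (inv u) (parI u hu)).
  - rewrite <- (iI z); auto. apply clen_inv; [apply uI; auto | auto].
  - assert (e: mul (inv u) z = inv (mul (inv z) u)) by (rewrite iM, iI; auto; apply uI; auto).
    rewrite e. apply clen_inv; auto. apply uM; auto; apply uI; auto.
Qed.

Lemma minL_to_R z : U z -> min_left mul one S (par I) z -> min_right mul one S (par I) (inv z).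
Proof.
  intros uz h u hu n m h1 h2.
  assert (uu : U u) by (apply parU; auto).
  apply (h (inv u) (parI u hu)).
  - rewrite <- (iI z); auto. apply clen_inv; [apply uI; auto | auto].
  - assert (e: mul z (inv u) = inv (mul u (inv z))) by (rewrite iM, iI; auto; apply uI; auto).
    rewrite e. apply clen_inv; auto. apply uM; auto; apply uI; auto.
Qed.

Lemma uniqR w w' u : U w -> min_right mul one S (par I) w -> min_right mul one S (par I) w' ->
  par I u -> w' = mul u w -> w = w'.
Proof.
  intros uw h1 h2 hu e.
  assert (uu : U u) by (apply parU; auto).
  assert (uw' : U w') by (rewrite e; apply uM; auto).
  assert (Hi : inv w = inv w').
  { apply (uniqL (inv w) (inv w') (inv u)); auto. apply uI; auto.
    apply minR_to_L; auto. apply minR_to_L; auto. apply parI; auto. rewrite e, iM; auto. }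
  rewrite <- (iI w), <- (iI w'), Hi; auto.
Qed.

Lemma existL w : U w -> exists h, par I h /\ min_left mul one S (par I) (mul w h).
Proof.
  intro uw.
  destruct (min_nat (fun n => exists h, par I h /\ clen (mul w h) n)) as [n [[h [hh hc]] hm]].
  { destruct (len_exists w uw) as [p hp]. exists p, one. split. apply par1. rewrite rid; auto. }
  exists h. split; auto. intros u hu n' m h1 h2.
  assert (n' = n) by (eapply clen_unique; eauto). subst n'.
  apply hm. exists (mul h u). split. apply parM; auto. rewrite assoc; auto.
Qed.

Lemma existR w : U w -> exists h, par I h /\ min_right mul one S (par I) (mul h w).
Proof.
  intro uw. destruct (existL (inv w)) as [h [hh hm]]. apply uI; auto.
  assert (uh : U h) by (apply parU; auto).
  exists (inv h). split. apply parI; auto.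
  apply minL_to_R in hm. rewrite iM, iI in hm; auto. apply uI; auto. apply uM; auto. apply uI; auto.
Qed.

End Len.


Section Mono.
Context {R : Type} (mul : R -> R -> R) (one : R).
Context (assoc : forall x y z, mul x (mul y z) = mul (mul x y) z)
        (lid : forall x, mul one x = x) (rid : forall x, mul x one = x).
Notation U := (is_unit mul one).
Notation inv := (uinv mul one).
Notation idem := (idem mul).
Context (comm : forall e f, idem e -> idem f -> mul e f = mul f e).

Lemma iR' w : U w -> mul w (inv w) = one. Proof. apply uinv_r. Qed.
Lemma iL' w : U w -> mul (inv w) w = one. Proof. apply uinv_l. Qed.
Lemma uM' a b : U a -> U b -> U (mul a b). Proof. apply unit_mul; auto. Qed.
Lemma uI' a : U a -> U (inv a). Proof. apply unit_inv. Qed.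

Lemma M1 f f' c c' : idem f -> idem f' -> U c -> U c' -> mul f c = mul f' c' -> f = f'.
Proof.
  intros hf hf' uc uc' e.
  assert (e1 : f = mul f' (mul c' (inv c))).
  { rewrite assoc, <- e, <- assoc, iR', rid; auto. }
  assert (e2 : f' = mul f (mul c (inv c'))).
  { rewrite assoc, e, <- assoc, iR', rid; auto. }
  assert (a1 : mul f' f = f). { rewrite e1 at 1. rewrite assoc, hf'. symmetry; exact e1. }
  assert (a2 : mul f f' = f'). { rewrite e2 at 1. rewrite assoc, hf. symmetry; exact e2. }
  rewrite <- a1, comm; auto.
Qed.

Lemma M2 e a : idem e -> U a -> idem (mul (mul a e) (inv a)).
Proof.
  intros he ua. unfold Defs.idem in *. rewrite <- !assoc. f_equal.
  rewrite (assoc (inv a) a), iL', lid; auto. rewrite assoc, he. reflexivity.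
Qed.

Lemma M3 e e' w1 w2 w1' w2' : idem e -> idem e' -> U w1 -> U w2 -> U w1' -> U w2' ->
  mul (mul w1 e) w2 = mul (mul w1' e') w2' -> mul (mul (mul (inv w1') w1) e) (inv (mul (inv w1') w1)) = e'.
Proof.
  intros he he' u1 u2 u1' u2' E.
  set (a := mul (inv w1') w1). set (b := mul w2 (inv w2')).
  assert (ua : U a) by (apply uM'; auto; apply uI'; auto).
  assert (ub : U b) by (apply uM'; auto; apply uI'; auto).
  assert (E2 : mul (mul a e) b = e').
  { unfold a, b. rewrite !assoc. rewrite <- (assoc (inv w1') w1 e), <- (assoc (inv w1') _ w2), E.
    rewrite !assoc, iL', lid, <- assoc, iR', rid; auto. }
  apply (M1 _ _ (mul a b) one); auto. apply M2; auto. apply uM'; auto. exists one; auto.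
  rewrite rid, <- E2. rewrite <- !assoc. f_equal. f_equal. rewrite assoc, iL', lid; auto.
Qed.

Lemma M4 e a b : idem e -> U a -> U b -> mul (mul a e) b = e ->
  mul a e = mul e a /\ mul (mul a b) e = e /\ mul e (mul a b) = e.
Proof.
  intros he ua ub E.
  assert (c1 : mul (mul a e) (inv a) = e).
  { apply (M1 _ _ (mul a b) one); auto. apply M2; auto. apply uM'; auto. exists one; auto.
    rewrite rid. transitivity (mul (mul a e) b); [|exact E].
    rewrite <- !assoc. f_equal. f_equal. rewrite assoc, iL', lid; auto. }
  assert (c2 : mul a e = mul e a).
  { rewrite <- c1 at 2. rewrite <- assoc, iL', rid; auto. }
  set (x := mul a b). assert (ux : U x) by (apply uM'; auto).
  assert (ex : mul e x = e).
  { unfold x. rewrite assoc, <- c2. exact E. }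
  assert (ex' : mul e (inv x) = e).
  { rewrite <- ex at 1. rewrite <- assoc, iR', rid; auto. }
  set (g := mul (mul x e) (inv x)). set (h := mul (mul (inv x) e) x).
  assert (hg : idem g) by (apply M2; auto).
  assert (eh : mul e h = e).
  { unfold h. rewrite !assoc, ex', he. exact ex. }
  assert (ge : mul g e = g).
  { assert (q : mul (mul x (mul e h)) (inv x) = g) by (rewrite eh; reflexivity).
    transitivity (mul (mul x (mul e h)) (inv x)); [| exact q]. unfold h, g. rewrite !assoc. rewrite <- (assoc _ x (inv x)), iR', rid; auto. }
  assert (eg : mul e g = e).
  { unfold g. rewrite !assoc, ex, he. exact ex'. }
  assert (gE : g = e) by (rewrite <- ge, comm; auto).
  assert (xe : mul x e = e).
  { assert (q : mul g x = mul e x) by (rewrite gE; reflexivity).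
    unfold g in q. rewrite <- assoc, iL', rid in q; auto. rewrite q. exact ex. }
  split; auto.
Qed.

End Mono.


Lemma min_left_iff {R : Type} (mul : R -> R -> R) one S (H H' : R -> Prop) w :
  (forall u, H u <-> H' u) -> min_left mul one S H w -> min_left mul one S H' w.
Proof. intros e h u hu. apply h. apply e; auto. Qed.
Lemma min_right_iff {R : Type} (mul : R -> R -> R) one S (H H' : R -> Prop) w :
  (forall u, H u <-> H' u) -> min_right mul one S H w -> min_right mul one S H' w.
Proof. intros e h u hu. apply h. apply e; auto. Qed.

Section Main.
Context {R : Type} (mul : R -> R -> R) (one : R).
Context (assoc : forall x y z, mul x (mul y z) = mul (mul x y) z)
        (lid : forall x, mul one x = x) (rid : forall x, mul x one = x).
Notation U := (is_unit mul one).
Notation inv := (uinv mul one).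
Context (comm : forall e f, idem mul e -> idem mul f -> mul e f = mul f e).
Context (Lambda : R -> Prop) (HLid : forall e, Lambda e -> idem mul e)
  (HOrb : forall e, idem mul e -> exists f, Lambda f /\ (exists w, U w /\ conj_by mul one w f e) /\
                 forall f', Lambda f' -> (exists w, U w /\ conj_by mul one w f' e) -> f' = f).
Context (S : R -> Prop) (Hcox : coxeter_system mul one S).
Context (N : R -> R -> bool)
  (P1 : forall l, Forall S l -> forall u, N (prod mul one l) u = true ->
     exists l1 s0 l2, l = l1 ++ s0 :: l2 /\ mul (prod mul one l) u = prod mul one (l1 ++ l2))
  (P2 : forall w s, U w -> S s -> N w s = false -> N (mul w s) s = true).

Lemma lam_unique e e' w1 w2 w1' w2' : Lambda e -> Lambda e' -> U w1 -> U w2 -> U w1' -> U w2' ->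
  mul (mul w1 e) w2 = mul (mul w1' e') w2' -> e = e'.
Proof.
  intros he he' u1 u2 u1' u2' E.
  pose proof (M3 mul one assoc lid rid comm e e' w1 w2 w1' w2' (HLid e he) (HLid e' he') u1 u2 u1' u2' E) as c.
  set (a := mul (inv w1') w1) in c.
  assert (ua : U a) by (apply uM'; auto; apply uI'; auto).
  destruct (HOrb e' (HLid e' he')) as [f [hf [_ hu]]].
  transitivity f.
  - apply hu; auto. exists a. split; auto. exists (inv a). split. apply iR'; auto. split. apply iL'; auto. exact c.
  - symmetry. apply hu; auto. exists one. split. exists one; auto. exists one. rewrite lid, rid. auto.
Qed.

Lemma aeb e w1 w2 w1' w2' : U w1 -> U w2 -> U w1' -> U w2' ->
  mul (mul w1 e) w2 = mul (mul w1' e) w2' ->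
  mul (mul (mul (inv w1') w1) e) (mul w2 (inv w2')) = e.
Proof.
  intros u1 u2 u1' u2' E. rewrite !assoc. rewrite <- (assoc (inv w1') w1 e), <- (assoc (inv w1') _ w2), E.
  rewrite !assoc, iL', lid, <- assoc, iR', rid; auto.
Qed.


End Main.

Theorem mainTheorem9 (R : Type) (mul : R -> R -> R) (one : R)
  (Lambda S : R -> Prop)
  (HRC : gen_renner_coxeter mul one Lambda S) (r : R) :
  (exists w1 e w2,
     Lambda e /\ is_unit mul one w1 /\ is_unit mul one w2 /\
     min_left mul one S (Wstar mul one e) w1 /\ min_right mul one S (Wc mul one e) w2 /\
     r = mul (mul w1 e) w2 /\
     forall w1' e' w2',
       Lambda e' -> is_unit mul one w1' -> is_unit mul one w2' ->
       min_left mul one S (Wstar mul one e') w1' -> min_right mul one S (Wc mul one e') w2' ->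
       r = mul (mul w1' e') w2' ->
       w1' = w1 /\ e' = e /\ w2' = w2)
  /\
  (exists v1 e v2,
     Lambda e /\ is_unit mul one v1 /\ is_unit mul one v2 /\
     min_left mul one S (Wc mul one e) v1 /\ min_right mul one S (Wstar mul one e) v2 /\
     r = mul (mul v1 e) v2 /\
     forall v1' e' v2',
       Lambda e' -> is_unit mul one v1' -> is_unit mul one v2' ->
       min_left mul one S (Wc mul one e') v1' -> min_right mul one S (Wstar mul one e') v2' ->
       r = mul (mul v1' e') v2' ->
       v1' = v1 /\ e' = e /\ v2' = v2).
Proof.
  destruct HRC as [[assoc [lid rid]] [[HEW [HWE comm]] [HLid [HOrb [_ [_ [Hcox [_ [H5 _]]]]]]]]].
  destruct (exists_N mul one assoc lid rid S Hcox) as [N [P1 P2]].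
  destruct (HWE r) as [w [f [uw [hf er]]]].
  destruct (HOrb f hf) as [e [he [[u [uu [u' [h1 [h2 h3]]]]] _]]].
  assert (uu' : is_unit mul one u') by (exists u; auto).
  set (A := mul w u). set (B := u').
  assert (uA : is_unit mul one A) by (apply uM'; auto).
  assert (rAB : r = mul (mul A e) B).
  { rewrite er, <- h3. unfold A, B. rewrite !assoc. reflexivity. }
  assert (uB : is_unit mul one B) by exact uu'.
  clearbody A B. clear er h3 h1 h2 uu uu' w u u' f hf uw.
  destruct (H5 e he) as [[I1 [HI1 E1]] [I2 [HI2 E2]]].
  set (U := is_unit mul one). set (inv := uinv mul one).
  assert (WcU : forall x, Wc mul one e x -> U x) by (intros x [hx _]; exact hx).
  assert (WsU : forall x, Wstar mul one e x -> U x) by (intros x [hx _]; exact hx).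
  assert (WsWc : forall x, Wstar mul one e x -> Wc mul one e x).
  { intros x [hx [a b]]. split; auto. congruence. }
  assert (WcI : forall x, Wc mul one e x -> Wc mul one e (inv x)).
  { intros x hx. apply E1. apply (parI mul one assoc lid rid S Hcox I1 HI1). apply E1; auto. }
  assert (WsI : forall x, Wstar mul one e x -> Wstar mul one e (inv x)).
  { intros x hx. apply E2. apply (parI mul one assoc lid rid S Hcox I2 HI2). apply E2; auto. }
  assert (WcM : forall x y, Wc mul one e x -> Wc mul one e y -> Wc mul one e (mul x y)).
  { intros x y hx hy. apply E1. apply (parM mul one assoc lid I1); apply E1; auto. }
  assert (iL : forall x, U x -> mul (inv x) x = one) by (intros; apply iL'; auto).
  assert (iR : forall x, U x -> mul x (inv x) = one) by (intros; apply iR'; auto).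
  split.
  - destruct (existR mul one assoc lid rid S Hcox I1 HI1 B uB) as [h [hh hmh]].
    assert (hW : Wc mul one e h) by (apply E1; auto).
    assert (uh : U h) by auto.
    assert (hWi := WcI h hW). destruct hWi as [uhi hWi].
    destruct (existL mul one assoc lid rid S Hcox I2 (mul A (inv h)) (uM' _ _ assoc lid _ _ uA uhi)) as [h' [hh' hmh']].
    assert (hS : Wstar mul one e h') by (apply E2; auto).
    destruct hS as [uh' [hS1 hS2]].
    set (w1 := mul (mul A (inv h)) h') in *. set (w2 := mul h B) in *.
    assert (u1 : U w1) by (unfold w1; repeat apply uM'; auto).
    assert (u2 : U w2) by (unfold w2; repeat apply uM'; auto).
    assert (rw : r = mul (mul w1 e) w2).
    { rewrite rAB. unfold w1, w2. rewrite <- !assoc. rewrite (assoc h' e), hS1.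
      rewrite (assoc (inv h) e), hWi, <- assoc, (assoc (inv h) h B), iL, lid; auto. }
    exists w1, e, w2. refine (conj he (conj u1 (conj u2 (conj _ (conj _ (conj rw _)))))).
    + eapply min_left_iff; [|exact hmh']. intro x. split; intro; apply E2; auto.
    + eapply min_right_iff; [|exact hmh]. intro x. split; intro; apply E1; auto.
    + intros w1' e' w2' he' u1' u2' m1' m2' E.
      assert (ee : e = e').
      { apply (lam_unique mul one assoc lid rid comm Lambda HLid HOrb e e' w1 w2 w1' w2'); auto. congruence. }
      subst e'.
      pose proof (aeb mul one assoc lid rid e w1 w2 w1' w2' u1 u2 u1' u2' ltac:(congruence)) as ab.
      set (a := mul (inv w1') w1) in *. set (b := mul w2 (inv w2')) in *.
      assert (ua : U a) by (unfold a; apply uM'; auto; apply uI'; auto).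
      assert (ub : U b) by (unfold b; apply uM'; auto; apply uI'; auto).
      destruct (M4 mul one assoc lid rid comm e a b (HLid e he) ua ub ab) as [c1 [c2 c3]].
      assert (aW : Wc mul one e a) by (split; auto).
      assert (abS : Wstar mul one e (mul a b)) by (split; auto; apply uM'; auto).
      assert (e2 : w2' = w2).
      { apply (uniqR mul one assoc lid rid S Hcox N P1 P2 I1 HI1 w2' w2 (mul (inv a) (mul a b))).
        - exact u2'.
        - eapply min_right_iff; [|exact m2']. intro x. apply E1.
        - exact hmh.
        - apply E1. apply WcM; auto.
        - rewrite assoc, iL, lid; auto. unfold b. rewrite <- assoc, iL, rid; auto. }
      assert (b1 : b = one) by (unfold b; rewrite e2; apply iR; auto).
      rewrite b1, rid in abS.
      assert (e1 : w1' = w1).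
      { apply (uniqL mul one assoc lid rid S Hcox N P1 P2 I2 HI2 w1' w1 a).
        - exact u1'.
        - eapply min_left_iff; [|exact m1']. intro x. apply E2.
        - exact hmh'.
        - apply E2; auto.
        - unfold a. rewrite assoc, iR, lid; auto. }
      auto.
  - destruct (existL mul one assoc lid rid S Hcox I1 A uA) as [h [hh hmh]].
    assert (hW : Wc mul one e h) by (apply E1; auto).
    assert (uh : U h) by auto.
    destruct hW as [_ hW].
    assert (uhi : U (inv h)) by (apply uI'; auto).
    destruct (existR mul one assoc lid rid S Hcox I2 HI2 (mul (inv h) B) (uM' _ _ assoc lid _ _ uhi uB)) as [h' [hh' hmh']].
    assert (hS : Wstar mul one e h') by (apply E2; auto).
    destruct hS as [uh' [hS1 hS2]].
    set (v1 := mul A h) in *. set (v2 := mul h' (mul (inv h) B)) in *.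
    assert (u1 : U v1) by (unfold v1; repeat apply uM'; auto).
    assert (u2 : U v2) by (unfold v2; repeat apply uM'; auto).
    assert (rw : r = mul (mul v1 e) v2).
    { rewrite rAB. unfold v1, v2. rewrite <- !assoc. rewrite (assoc e h'), hS2.
      rewrite (assoc h e), hW, <- assoc, (assoc h (inv h) B), iR, lid; auto. }
    exists v1, e, v2. refine (conj he (conj u1 (conj u2 (conj _ (conj _ (conj rw _)))))).
    + eapply min_left_iff; [|exact hmh]. intro x. split; intro; apply E1; auto.
    + eapply min_right_iff; [|exact hmh']. intro x. split; intro; apply E2; auto.
    + intros v1' e' v2' he' u1' u2' m1' m2' E.
      assert (ee : e = e').
      { apply (lam_unique mul one assoc lid rid comm Lambda HLid HOrb e e' v1 v2 v1' v2'); auto. congruence. }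
      subst e'.
      pose proof (aeb mul one assoc lid rid e v1 v2 v1' v2' u1 u2 u1' u2' ltac:(congruence)) as ab.
      set (a := mul (inv v1') v1) in *. set (b := mul v2 (inv v2')) in *.
      assert (ua : U a) by (unfold a; apply uM'; auto; apply uI'; auto).
      assert (ub : U b) by (unfold b; apply uM'; auto; apply uI'; auto).
      destruct (M4 mul one assoc lid rid comm e a b (HLid e he) ua ub ab) as [c1 [c2 c3]].
      assert (aW : Wc mul one e a) by (split; auto).
      assert (abS : Wstar mul one e (mul a b)) by (split; auto; apply uM'; auto).
      assert (e1 : v1' = v1).
      { apply (uniqL mul one assoc lid rid S Hcox N P1 P2 I1 HI1 v1' v1 a).
        - exact u1'.
        - eapply min_left_iff; [|exact m1']. intro x. apply E1.
        - exact hmh.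
        - apply E1; auto.
        - unfold a. rewrite assoc, iR, lid; auto. }
      assert (a1 : a = one) by (unfold a; rewrite e1; apply iL; auto).
      rewrite a1, lid in abS.
      assert (e2 : v2' = v2).
      { apply (uniqR mul one assoc lid rid S Hcox N P1 P2 I2 HI2 v2' v2 b).
        - exact u2'.
        - eapply min_right_iff; [|exact m2']. intro x. apply E2.
        - exact hmh'.
        - apply E2; auto.
        - unfold b. rewrite <- assoc, iL, rid; auto. }
      auto.
Qed.
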